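(* If $X$ satisfies ${\sf S}_1(\mathcal{G}_K,\mathcal{G}_{D_\Gamma})$, then $X$ is productively weakly Menger: for every weakly Menger space $Y$, $X\times Y$ is weakly Menger.
   Context: All spaces are infinite ${\sf T}_1$ topological spaces. $\mathcal{G}_K$ is the family of all collections $\mathcal{U}$ of ${\sf G}_\delta$ subsets of $X$ with $X\notin\mathcal{U}$ such that each compact subset of $X$ is contained in some member of $\mathcal{U}$. $\mathcal{G}_{D_\Gamma}$ is the family of infinite collections $\mathcal{U}$ of ${\sf G}_\delta$ subsets of $X$ such that for each nonempty open $U\subseteq X$, $\{V\in\mathcal{U}:U\cap V=\emptyset\}$ is finite. ${\sf S}_1(\mathcal{A},\mathcal{B})$: for each sequence $(A_n)$ of elements of $\mathcal{A}$ there are $B_n\in A_n$ with $\{B_n:n\in\mathbb{N}\}\in\mathcal{B}$. A space is weakly Menger if for each sequence $(\mathcal{U}_n)$ of open covers there are finite $\mathcal{V}_n\subseteq\mathcal{U}_n$ such that $\bigcup_n\bigcup\mathcal{V}_n$ is dense. *)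

(* Defs.v *)
From Stdlib Require Import List.

Definition set (T : Type) := T -> Prop.

Definition subset {T} (A B : set T) : Prop := forall x, A x -> B x.

(* axioms of a topology (empty set is the union of the empty family) *)
Definition is_topology {T} (op : set T -> Prop) : Prop :=
  op (fun _ => True) /\
  (forall U V, op U -> op V -> op (fun x => U x /\ V x)) /\
  (forall F : set (set T), (forall U, F U -> op U) ->
     op (fun x => exists U, F U /\ U x)).

Definition T1_space {T} (op : set T -> Prop) : Prop :=
  forall x y : T, x <> y -> exists U, op U /\ U x /\ ~ U y.

Definition infinite_type (T : Type) : Prop :=
  ~ exists l : list T, forall x, In x l.

Definition compact {T} (op : set T -> Prop) (K : set T) : Prop :=
  forall F : set (set T), (forall U, F U -> op U) ->
    (forall x, K x -> exists U, F U /\ U x) ->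
    exists l : list (set T), (forall U, In U l -> F U) /\
      (forall x, K x -> exists U, In U l /\ U x).

Definition Gdelta {T} (op : set T -> Prop) (A : set T) : Prop :=
  exists W : nat -> set T, (forall n, op (W n)) /\
    (forall x, A x <-> forall n, W n x).

Definition dense {T} (op : set T -> Prop) (D : set T) : Prop :=
  forall U, op U -> (exists x, U x) -> exists x, U x /\ D x.

Definition open_cover {T} (op : set T -> Prop) (F : set (set T)) : Prop :=
  (forall U, F U -> op U) /\ (forall x, exists U, F U /\ U x).

(* finiteness of a collection of sets (up to extensional equality of sets) *)
Definition finite_col {T} (C : set (set T)) : Prop :=
  exists l : list (set T), forall V, C V ->
    exists W, In W l /\ (forall x, V x <-> W x).

Definition weakly_Menger {T} (op : set T -> Prop) : Prop :=
  forall Us : nat -> set (set T), (forall n, open_cover op (Us n)) ->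
    exists Vs : nat -> list (set T),
      (forall n U, In U (Vs n) -> Us n U) /\
      dense op (fun x => exists n U, In U (Vs n) /\ U x).

Definition G_K {T} (op : set T -> Prop) : set (set (set T)) :=
  fun C => (forall V, C V -> Gdelta op V) /\
           ~ (exists V, C V /\ forall x, V x) /\
           (forall K, compact op K -> exists V, C V /\ subset K V).

Definition G_DGamma {T} (op : set T -> Prop) : set (set (set T)) :=
  fun C => ~ finite_col C /\ (forall V, C V -> Gdelta op V) /\
           (forall U, op U -> (exists x, U x) ->
              finite_col (fun V => C V /\ ~ exists x, U x /\ V x)).

Definition S1 {T} (A B : set (set (set T))) : Prop :=
  forall As : nat -> set (set T), (forall n, A (As n)) ->
    exists Bs : nat -> set T, (forall n, As n (Bs n)) /\
      B (fun V => exists n, V = Bs n).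

Definition prod_open {X Y} (opX : set X -> Prop) (opY : set Y -> Prop)
  (W : set (X * Y)) : Prop :=
  forall p, W p -> exists U V, opX U /\ opY V /\ U (fst p) /\ V (snd p) /\
    (forall q, U (fst q) -> V (snd q) -> W q).

(* Main.v *)
Require Import Defs.
From Stdlib Require Import List Lia Classical IndefiniteDescription.

Lemma choice_fun {A B : Type} (P : A -> B -> Prop) :
  (forall a, exists b, P a b) -> exists f : A -> B, forall a, P a (f a).
Proof.
  intros H.
  exists (fun a => proj1_sig (constructive_indefinite_description _ (H a))).
  intros a. exact (proj2_sig (constructive_indefinite_description _ (H a))).
Qed.

Lemma tube_list {X Y : Type} (opY : set Y -> Prop) (hY : is_topology opY)
  (Gs : set (set (X*Y))) (y : Y) (l : list (set X)) :
  (forall U, In U l -> exists V G, opY V /\ V y /\ Gs G /\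
       forall a b, U a -> V b -> G (a,b)) ->
  exists O F, opY O /\ O y /\ (forall G, In G F -> Gs G) /\
    (forall U, In U l -> forall a b, U a -> O b -> exists G, In G F /\ G (a,b)).
Proof.
  destruct hY as [hT [hI _]].
  induction l as [|U l IH]; intros H.
  - exists (fun _ => True), nil. repeat split; auto.
    + intros G []. 
    + intros U [].
  - destruct (H U (or_introl eq_refl)) as [V [G [hV [hVy [hG hUV]]]]].
    destruct IH as [O [F [hO [hOy [hF hOF]]]]].
    { intros U' hU'. apply H. right. exact hU'. }
    exists (fun b => O b /\ V b), (G :: F). repeat split; auto.
    + intros G' [<-|hG']; auto.
    + intros U' [<-|hU'] a b ha [hb1 hb2].
      * exists G. split; [left; reflexivity|]. auto.
      * destruct (hOF U' hU' a b ha hb1) as [G' [h1 h2]].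
        exists G'. split; [right; exact h1|exact h2].
Qed.

Lemma Z_list {X Y : Type} (opX : set X -> Prop) (hX : is_topology opX)
  (Gs : set (set (X*Y))) (K : set X) (l : list (set Y)) :
  (forall O, In O l -> exists Z F, opX Z /\ subset K Z /\
      (forall G, In G F -> Gs G) /\
      forall x y, Z x -> O y -> exists G, In G F /\ G (x,y)) ->
  exists Z F, opX Z /\ subset K Z /\ (forall G, In G F -> Gs G) /\
    (forall O, In O l -> forall x y, Z x -> O y -> exists G, In G F /\ G (x,y)).
Proof.
  destruct hX as [hT [hI _]].
  induction l as [|O l IH]; intros H.
  - exists (fun _ => True), nil. repeat split; auto.
    + intros G []. 
    + intros O [].
  - destruct (H O (or_introl eq_refl)) as [Z1 [F1 [h1 [h2 [h3 h4]]]]].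
    destruct IH as [Z2 [F2 [g1 [g2 [g3 g4]]]]].
    { intros O' hO'. apply H. right. exact hO'. }
    exists (fun x => Z1 x /\ Z2 x), (F1 ++ F2). split; [auto|]. split; [intros x hx; split; auto|]. split.
    + intros G hG. apply in_app_or in hG as [hG|hG]; auto.
    + intros O' [<-|hO'] x y [hx1 hx2] hy.
      * destruct (h4 x y hx1 hy) as [G [a b]]. exists G.
        split; [apply in_or_app; left; exact a| exact b].
      * destruct (g4 O' hO' x y hx2 hy) as [G [a b]]. exists G.
        split; [apply in_or_app; right; exact a| exact b].
Qed.

Definition good {X Y : Type} (opX : set X -> Prop) (opY : set Y -> Prop)
  (Ws : nat -> set (set (X*Y))) (k : nat) (B : set X) : Prop :=
  Gdelta opX B /\ exists Fs : nat -> list (set (X*Y)),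
    (forall j G, In G (Fs j) -> Ws (j + k) G) /\
    forall x, B x -> dense opY (fun y => exists j G, In G (Fs j) /\ G (x,y)).

Lemma good_exists {X Y : Type} (opX : set X -> Prop) (opY : set Y -> Prop)
  (hX : is_topology opX) (hY : is_topology opY) (hWM : weakly_Menger opY)
  (Ws : nat -> set (set (X*Y))) (hWs : forall n, open_cover (prod_open opX opY) (Ws n))
  (k : nat) (K : set X) (hK : compact opX K) :
  exists B, good opX opY Ws k B /\ subset K B.
Proof.
  set (C := fun (j : nat) (O : set Y) => opY O /\ exists Z F, opX Z /\ subset K Z /\
      (forall G, In G F -> Ws (j + k) G) /\
      forall x y, Z x -> O y -> exists G, In G F /\ G (x,y)).
  assert (hC : forall j, open_cover opY (C j)).
  { intros j. split.
    - intros O [h _]; exact h.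
    - intros y.
      set (F0 := fun U : set X => opX U /\ exists V G, opY V /\ V y /\ Ws (j+k) G /\
                  forall a b, U a -> V b -> G (a,b)).
      destruct (hK F0) as [l [hl1 hl2]].
      + intros U [h _]; exact h.
      + intros x _. destruct (hWs (j+k)) as [hop hcov].
        destruct (hcov (x,y)) as [G [hG hGxy]].
        destruct (hop G hG (x,y) hGxy) as [U [V [hU [hV [hUx [hVy hUV]]]]]].
        exists U. split; [|exact hUx]. split; [exact hU|].
        exists V, G. split; [exact hV|]. split; [exact hVy|]. split; [exact hG|].
        intros a b ha hb. exact (hUV (a,b) ha hb).
      + destruct (tube_list opY hY (Ws (j+k)) y l) as [O [F [hO [hOy [hF hOF]]]]].
        { intros U hU. destruct (hl1 U hU) as [_ h]. exact h. }
        exists O. split; [|exact hOy]. split; [exact hO|].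
        exists (fun x => exists U, In U l /\ U x), F. split; [|split; [|split; [exact hF|]]].
        * destruct hX as [_ [_ hUn]]. apply hUn.
          intros U hU. destruct (hl1 U hU) as [h _]. exact h.
        * intros x hx. exact (hl2 x hx).
        * intros x y' [U [hU hUx]] hy'. exact (hOF U hU x y' hUx hy'). }
  destruct (hWM C hC) as [Vs [hVs hdense]].
  assert (hj : forall j, exists p : set X * list (set (X*Y)),
     opX (fst p) /\ subset K (fst p) /\ (forall G, In G (snd p) -> Ws (j+k) G) /\
     (forall O, In O (Vs j) -> forall x y, fst p x -> O y ->
         exists G, In G (snd p) /\ G (x,y))).
  { intros j. destruct (Z_list opX hX (Ws (j+k)) K (Vs j)) as [Z [F H]].
    - intros O hO. destruct (hVs j O hO) as [_ h]. exact h.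
    - exists (Z, F). exact H. }
  destruct (choice_fun _ hj) as [f hf].
  exists (fun x => forall j, fst (f j) x). split.
  - split.
    + exists (fun j => fst (f j)). split; [intros n; apply hf|]. intros x; tauto.
    + exists (fun j => snd (f j)). split.
      * intros j G hG. apply (hf j). exact hG.
      * intros x hx U hU hUne.
        destruct (hdense U hU hUne) as [y [hUy [j [O [hO hOy]]]]].
        destruct (hf j) as [_ [_ [_ h4]]].
        destruct (h4 O hO x y (hx j) hOy) as [G [hG hGxy]].
        exists y. split; [exact hUy|]. exists j, G. auto.
  - intros x hx j. destruct (hf j) as [_ [h _]]. exact (h x hx).
Qed.

Lemma final {X Y : Type} (opX : set X -> Prop) (opY : set Y -> Prop)
  (Ws : nat -> set (set (X*Y)))
  (g : nat -> nat -> list (set (X*Y)))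
  (hg : forall k j G, In G (g k j) -> Ws (j + k) G)
  (hd : forall U, opX U -> (exists x, U x) -> exists k x, U x /\
         dense opY (fun y => exists j G, In G (g k j) /\ G (x,y))) :
  exists Vs : nat -> list (set (X*Y)),
    (forall n U, In U (Vs n) -> Ws n U) /\
    dense (prod_open opX opY) (fun x => exists n U, In U (Vs n) /\ U x).
Proof.
  exists (fun m => flat_map (fun k => g k (m - k)) (seq 0 (S m))). split.
  - intros m G hG. apply in_flat_map in hG as [k [hk hG]].
    apply in_seq in hk. apply hg in hG. replace (m - k + k) with m in hG by lia.
    exact hG.
  - intros W hW [p hp].
    destruct (hW p hp) as [U [V [hU [hV [hUp [hVp hUV]]]]]].
    destruct (hd U hU (ex_intro _ _ hUp)) as [k [x [hUx hdx]]].
    destruct (hdx V hV (ex_intro _ _ hVp)) as [y [hVy [j [G [hG hGxy]]]]].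
    exists (x,y). split.
    + apply hUV; assumption.
    + exists (j + k), G. split; [|exact hGxy].
      apply in_flat_map. exists k. split.
      * apply in_seq. lia.
      * replace (j + k - k) with j by lia. exact hG.
Qed.

Theorem theorem5p15 (X : Type) (opX : set X -> Prop)
  (hX : is_topology opX) (hXT1 : T1_space opX) (hXinf : infinite_type X)
  (hS : S1 (G_K opX) (G_DGamma opX)) :
  forall (Y : Type) (opY : set Y -> Prop),
    is_topology opY -> T1_space opY -> infinite_type Y ->
    weakly_Menger opY -> weakly_Menger (prod_open opX opY).
Proof.
  intros Y opY hY _ _ hWM Ws hWs.
  destruct (classic (exists k B, good opX opY Ws k B /\ forall x, B x))
    as [[k [B [[_ [Fs [hF1 hF2]]] hall]]] | hno].
  - apply (final opX opY Ws
      (fun k' j => if PeanoNat.Nat.eq_dec k' k then Fs j else nil)).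
    + intros k' j G. destruct (PeanoNat.Nat.eq_dec k' k) as [->|_]; [apply hF1|intros []].
    + intros U _ [x hx]. exists k, x. split; [exact hx|].
      destruct (PeanoNat.Nat.eq_dec k k) as [_|n]; [|exfalso; apply n; reflexivity].
      apply hF2, hall.
  - destruct (hS (fun k => good opX opY Ws k)) as [Bs [hBs hD]].
    + intros k. split; [|split].
      * intros V [h _]; exact h.
      * intros [V [hV hall]]. apply hno. exists k, V. auto.
      * intros K hK. exact (good_exists opX opY hX hY hWM Ws hWs k K hK).
    + assert (hk : forall k, exists Fs : nat -> list (set (X*Y)),
        (forall j G, In G (Fs j) -> Ws (j + k) G) /\
        forall x, Bs k x -> dense opY (fun y => exists j G, In G (Fs j) /\ G (x,y))).
      { intros k. destruct (hBs k) as [_ h]. exact h. }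
      destruct (choice_fun _ hk) as [g hg].
      apply (final opX opY Ws g).
      * intros k. apply (hg k).
      * intros U hU hUne.
        destruct hD as [hinf [_ hfin]].
        destruct (classic (exists k x, U x /\ Bs k x)) as [[k [x [hx1 hx2]]]|hn].
        -- exists k, x. split; [exact hx1|]. apply (hg k). exact hx2.
        -- exfalso. apply hinf.
           destruct (hfin U hU hUne) as [l hl]. exists l.
           intros V hV. apply hl. split; [exact hV|].
           intros [x [hx1 hx2]]. destruct hV as [n ->]. apply hn.
           exists n, x. auto.
Qed.
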